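(* Let $N\ge1$, $\frac{(N-2)_+}{N}<m<1$, $q=m+\frac2N$. There exists $A_{sub}>0$ depending only on $N$ and $m$ such that: (i) if $m\in[\frac{N-1}{N},1)$, then for every $A\ge A_{sub}$ the function $w_A(s,y):=\sigma_A(y)$ satisfies $\partial_s w_A-\mathcal{L}w_A\le0$ in $(0,\infty)\times\mathbb{R}^N$; (ii) if $m\in(\frac{(N-2)_+}{N},\frac{N-1}{N})$, then for every $A\ge A_{sub}$ the function $$w_A(s,y):=\sigma_A(y)\Big(1-\frac{\gamma}{s}\Big),\qquad \gamma:=\frac{1}{2(1-m)},$$ satisfies $\partial_s w_A-\mathcal{L}w_A\le0$ in $(s_0,\infty)\times\mathbb{R}^N$, where $s_0:=\max\{\frac{4q}{1-m},\frac{2^{m+2}q}{q-1}\}$.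
   Context: $\sigma_A(y):=(A+B_0|y|^2)^{1/(m-1)}$ for $A>0$, with $B_0:=\frac{1-m}{2m(mN-N+2)}$. The nonlinear operator $\mathcal{L}$ acts on positive functions $z(s,y)$ by $$\mathcal{L}z:=\Delta z^m+\frac{1}{N(q-1)}(Nz+y\cdot\nabla z)+\frac{1}{(q-1)s}\Big(z+\frac{1-m}{2}y\cdot\nabla z\Big)-\frac{z^q}{s},$$ with $q=m+2/N$. *)

(* Defs.v *)
From Stdlib Require Import Reals Lra ClassicalEpsilon.
Open Scope R_scope.

(* Points of R^N are represented as y : nat -> R; only coordinates 0..N-1 matter. *)
Fixpoint sumN (n : nat) (f : nat -> R) : R :=
  match n with O => 0 | S k => sumN k f + f k end.

Definition norm2 (N : nat) (y : nat -> R) : R := sumN N (fun i => y i ^ 2).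

(* The derivative of f : R -> R at x (chosen by epsilon; it is the true
   derivative whenever f is differentiable at x, which is the case here). *)
Definition Deriv (f : R -> R) (x : R) : R :=
  epsilon (inhabits 0) (fun l => derivable_pt_lim f x l).

Definition upd (y : nat -> R) (i : nat) (t : R) : nat -> R :=
  fun j => if Nat.eqb j i then t else y j.

Definition partial (i : nat) (f : (nat -> R) -> R) (y : nat -> R) : R :=
  Deriv (fun t => f (upd y i t)) (y i).

Definition laplacian (N : nat) (f : (nat -> R) -> R) (y : nat -> R) : R :=
  sumN N (fun i => partial i (partial i f) y).

Definition ygrad (N : nat) (f : (nat -> R) -> R) (y : nat -> R) : R :=
  sumN N (fun i => y i * partial i f y).

Definition qexp (N : nat) (m : R) : R := m + 2 / INR N.

Definition B0 (N : nat) (m : R) : R :=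
  (1 - m) / (2 * m * (m * INR N - INR N + 2)).

Definition sigmaA (N : nat) (m A : R) (y : nat -> R) : R :=
  Rpower (A + B0 N m * norm2 N y) (1 / (m - 1)).

Definition Lop (N : nat) (m : R) (z : R -> (nat -> R) -> R) (s : R) (y : nat -> R) : R :=
  let q := qexp N m in
  laplacian N (fun x => Rpower (z s x) m) y
  + 1 / (INR N * (q - 1)) * (INR N * z s y + ygrad N (z s) y)
  + 1 / ((q - 1) * s) * (z s y + (1 - m) / 2 * ygrad N (z s) y)
  - Rpower (z s y) q / s.

Definition parab (N : nat) (m : R) (w : R -> (nat -> R) -> R) (s : R) (y : nat -> R) : R :=
  Deriv (fun t => w t y) s - Lop N m w s y.

(* Main.v *)
Require Import Defs.
From Stdlib Require Import Reals Lra Lia ClassicalEpsilon FunctionalExtensionality.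
Open Scope R_scope.

Lemma Deriv_eq f x l : derivable_pt_lim f x l -> Deriv f x = l.
Proof.
  intros H. unfold Deriv.
  apply (uniqueness_limite f x).
  - apply (epsilon_spec (inhabits 0) (fun l => derivable_pt_lim f x l)). exists l; exact H.
  - exact H.
Qed.

Lemma sumN_ext n f g : (forall i, (i < n)%nat -> f i = g i) -> sumN n f = sumN n g.
Proof.
  induction n; simpl; intros H; auto.
  rewrite IHn by (intros; apply H; lia). rewrite H by lia. auto.
Qed.

Lemma sumN_lin n (al be : R) f :
  sumN n (fun i => al + be * f i) = INR n * al + be * sumN n f.
Proof.
  induction n; cbn [sumN]. simpl; ring. rewrite IHn. rewrite S_INR. ring.
Qed.

Lemma norm2_upd_out N y i t : (N <= i)%nat -> norm2 N (upd y i t) = norm2 N y.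
Proof.
  intros H. unfold norm2. apply sumN_ext. intros j Hj. unfold upd.
  destruct (Nat.eqb_spec j i); [lia|auto].
Qed.

Lemma norm2_upd N y i t : (i < N)%nat ->
  norm2 N (upd y i t) = norm2 N y - y i ^ 2 + t ^ 2.
Proof.
  induction N; intros H; [lia|].
  unfold norm2; cbn [sumN]. fold (norm2 N (upd y i t)). fold (norm2 N y).
  destruct (Nat.eq_dec i N).
  - subst. rewrite norm2_upd_out by lia. unfold upd. rewrite Nat.eqb_refl. ring.
  - rewrite IHN by lia. unfold upd. destruct (Nat.eqb_spec N i); [lia|]. ring.
Qed.

Lemma upd_same y i t : upd y i t i = t.
Proof. unfold upd. now rewrite Nat.eqb_refl. Qed.

Lemma norm2_nonneg N y : 0 <= norm2 N y.
Proof. unfold norm2. induction N; cbn [sumN]. lra. pose proof (pow2_ge_0 (y N)). lra. Qed.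

Lemma D_rp (a : R) (h : R -> R) (x h' : R) :
  derivable_pt_lim h x h' -> 0 < h x ->
  derivable_pt_lim (fun t => Rpower (h t) a) x (a * Rpower (h x) (a - 1) * h').
Proof.
  intros Hd Hp.
  exact (derivable_pt_lim_comp h (fun x0 => Rpower x0 a) x h' _ Hd (derivable_pt_lim_power (h x) a Hp)).
Qed.

Section Rad.
Variables (N : nat) (K a A B : R).
Hypothesis HA : 0 < A.
Hypothesis HB : 0 <= B.

Definition F (x : nat -> R) := K * Rpower (A + B * norm2 N x) a.

Lemma inner_deriv c t : 0 <= c ->
  derivable_pt_lim (fun u => A + B * (c + u ^ 2)) t (B * (2 * t)).
Proof.
  intros _.
  replace (B * (2 * t)) with (0 + B * (0 + INR 2 * t ^ (2 - 1))) by (simpl; ring).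
  apply derivable_pt_lim_plus. apply derivable_pt_lim_const.
  apply derivable_pt_lim_scal. apply derivable_pt_lim_plus. apply derivable_pt_lim_const.
  apply derivable_pt_lim_pow.
Qed.

Lemma partial_F y i : (i < N)%nat ->
  partial i F y = K * (a * Rpower (A + B * norm2 N y) (a - 1) * (B * (2 * y i))).
Proof.
  intros Hi. unfold partial.
  set (c := norm2 N y - y i ^ 2).
  assert (Hc : 0 <= c).
  { unfold c. pose proof (norm2_upd N y i 0 Hi) as E. pose proof (norm2_nonneg N (upd y i 0)).
    replace (0^2) with 0 in E by ring. lra. }
  replace (fun t => F (upd y i t)) with (fun t => K * Rpower (A + B * (c + t ^ 2)) a).
  2:{ apply functional_extensionality. intros t. unfold F. rewrite norm2_upd by auto.
      unfold c. reflexivity. }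
  apply Deriv_eq.
  replace (norm2 N y) with (c + y i ^ 2) by (unfold c; ring).
  apply derivable_pt_lim_scal.
  apply (D_rp a (fun u => A + B * (c + u ^ 2))).
  - apply inner_deriv; auto.
  - assert (0 <= y i ^ 2) by nra. nra.
Qed.

Lemma c_nonneg y i : (i < N)%nat -> 0 <= norm2 N y - y i ^ 2.
Proof.
  intros Hi. pose proof (norm2_upd N y i 0 Hi) as E. pose proof (norm2_nonneg N (upd y i 0)).
  replace (0^2) with 0 in E by ring. lra.
Qed.

Lemma partial2_F y i : (i < N)%nat ->
  partial i (partial i F) y =
  K * a * (2 * B * Rpower (A + B * norm2 N y) (a - 1)
           + 4 * B ^ 2 * (a - 1) * Rpower (A + B * norm2 N y) (a - 1 - 1) * y i ^ 2).
Proof.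
  intros Hi. unfold partial at 1.
  set (c := norm2 N y - y i ^ 2).
  assert (Hc : 0 <= c) by (apply c_nonneg; auto).
  replace (fun t => partial i F (upd y i t)) with
     (fun t => K * (a * Rpower (A + B * (c + t ^ 2)) (a - 1) * (B * (2 * t)))).
  2:{ apply functional_extensionality. intros t. rewrite partial_F by auto.
      rewrite norm2_upd by auto. rewrite upd_same. unfold c. reflexivity. }
  apply Deriv_eq.
  replace (norm2 N y) with (c + y i ^ 2) by (unfold c; ring).
  assert (Hp : 0 < A + B * (c + y i ^ 2)) by (assert (0 <= y i ^ 2) by nra; nra).
  set (U := A + B * (c + y i ^ 2)) in *.
  replace (K * a * (2 * B * Rpower U (a - 1) + 4 * B ^ 2 * (a - 1) * Rpower U (a - 1 - 1) * y i ^ 2))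
    with (K * (a * ((a - 1) * Rpower U (a - 1 - 1) * (B * (2 * y i))) * (B * (2 * y i))
               + a * Rpower U (a - 1) * (B * 2))) by (simpl; ring).
  apply derivable_pt_lim_scal.
  apply (derivable_pt_lim_mult (fun t => a * Rpower (A + B * (c + t ^ 2)) (a - 1)) (fun t => B * (2 * t))).
  - apply derivable_pt_lim_scal. apply (D_rp (a - 1) (fun u => A + B * (c + u ^ 2))).
    + apply inner_deriv; auto.
    + exact Hp.
  - replace (B * 2) with (B * (2 * 1)) by ring. apply derivable_pt_lim_scal. apply derivable_pt_lim_scal.
    apply derivable_pt_lim_id.
Qed.

Lemma lap_F y :
  laplacian N F y =
  K * a * (2 * B * INR N * Rpower (A + B * norm2 N y) (a - 1)
           + 4 * B ^ 2 * (a - 1) * Rpower (A + B * norm2 N y) (a - 1 - 1) * norm2 N y).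
Proof.
  unfold laplacian. rewrite (sumN_ext N _ (fun i =>
     K * a * (2 * B * Rpower (A + B * norm2 N y) (a - 1)) +
     (K * a * 4 * B ^ 2 * (a - 1) * Rpower (A + B * norm2 N y) (a - 1 - 1)) * y i ^ 2)).
  - rewrite sumN_lin. fold (norm2 N y). ring.
  - intros i Hi. rewrite partial2_F by auto. ring.
Qed.

Lemma ygrad_F y :
  ygrad N F y = K * a * Rpower (A + B * norm2 N y) (a - 1) * (2 * B) * norm2 N y.
Proof.
  unfold ygrad. rewrite (sumN_ext N _ (fun i =>
     0 + (K * a * Rpower (A + B * norm2 N y) (a - 1) * (2 * B)) * y i ^ 2)).
  - rewrite sumN_lin. fold (norm2 N y). ring.
  - intros i Hi. rewrite partial_F by auto. ring.
Qed.
End Rad.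

Lemma Rpower_pos x y : 0 < Rpower x y.
Proof. unfold Rpower. apply exp_pos. Qed.

Lemma Lop_eval N m A (g : R -> R) s y :
  0 < A -> 0 <= B0 N m -> 0 < g s ->
  Lop N m (fun t x => sigmaA N m A x * g t) s y =
  Rpower (g s) m * (1 / (m - 1) * m) *
     (2 * B0 N m * INR N * Rpower (A + B0 N m * norm2 N y) (1 / (m - 1) * m - 1)
      + 4 * B0 N m ^ 2 * (1 / (m - 1) * m - 1)
          * Rpower (A + B0 N m * norm2 N y) (1 / (m - 1) * m - 1 - 1) * norm2 N y)
  + 1 / (INR N * (qexp N m - 1)) *
     (INR N * (Rpower (A + B0 N m * norm2 N y) (1 / (m - 1)) * g s)
      + g s * (1 / (m - 1)) * Rpower (A + B0 N m * norm2 N y) (1 / (m - 1) - 1) * (2 * B0 N m) * norm2 N y)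
  + 1 / ((qexp N m - 1) * s) *
     (Rpower (A + B0 N m * norm2 N y) (1 / (m - 1)) * g s
      + (1 - m) / 2 * (g s * (1 / (m - 1)) * Rpower (A + B0 N m * norm2 N y) (1 / (m - 1) - 1) * (2 * B0 N m) * norm2 N y))
  - Rpower (Rpower (A + B0 N m * norm2 N y) (1 / (m - 1)) * g s) (qexp N m) / s.
Proof.
  intros HA HB Hg.
  unfold Lop. cbv beta.
  replace (fun x => Rpower (sigmaA N m A x * g s) m)
    with (F N (Rpower (g s) m) (1 / (m - 1) * m) A (B0 N m)).
  2:{ apply functional_extensionality; intros x. unfold F, sigmaA.
      rewrite <- Rpower_mult_distr by (auto; apply Rpower_pos).
      rewrite Rpower_mult. ring. }
  replace (fun x => sigmaA N m A x * g s)
    with (F N (g s) (1 / (m - 1)) A (B0 N m)).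
  2:{ apply functional_extensionality; intros x. unfold F, sigmaA. ring. }
  rewrite lap_F by auto. rewrite ygrad_F by auto.
  unfold F, sigmaA. reflexivity.
Qed.

Lemma Lop_simpl N m A (g : R -> R) s y :
  (1 <= N)%nat -> 0 < m -> m < 1 -> 0 < m * INR N - INR N + 2 ->
  0 < A -> 0 < g s -> s <> 0 ->
  let B := B0 N m in
  let U := A + B * norm2 N y in
  let e := 1 / (m - 1) in
  let sg := Rpower U e in
  let W := Rpower U (e - 1) in
  let T := B * norm2 N y * W in
  let q := qexp N m in
  let k := INR N * (q - 1) in
  Lop N m (fun t x => sigmaA N m A x * g t) s y =
  - (Rpower (g s) m / k) * (INR N * sg + 2 * e * T) + (g s / k) * (INR N * sg + 2 * e * T)
  + (g s / ((q - 1) * s)) * (sg - T) - Rpower (sg * g s) q / s.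
Proof.
  intros HN Hm0 Hm1 Hk HA Hg Hs B U e sg W T q k.
  assert (HNr : 0 < INR N) by (apply lt_0_INR; lia).
  assert (HB : 0 <= B0 N m).
  { unfold B0. apply Rlt_le. apply Rdiv_lt_0_compat; [lra|]. nra. }
  rewrite Lop_eval by auto.
  replace (1 / (m - 1) * m - 1 - 1) with (1 / (m - 1) - 1) by (field; lra).
  replace (1 / (m - 1) * m - 1) with (1 / (m - 1)) by (field; lra).
  unfold T, W, sg, e, U, B, k, q. unfold B0, qexp.
  field. repeat split; try lra. 
Qed.

Lemma phi_bounds m x : 0 < m -> m < 1 -> 0 < x -> x <= 1/8 ->
  (1 - m) * (1 - x) * x <= Rpower (1 - x) m - (1 - x) <= 7/6 * (1 - m) * x.
Proof.
  intros Hm0 Hm1 Hx0 Hx1.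
  set (p := 1 - x). assert (Hp : 7/8 <= p) by (unfold p; lra).
  assert (Hp0 : 0 < p) by lra.
  set (L := - ln p).
  assert (HL1 : x <= L).
  { pose proof (exp_ineq1_le (ln p)). rewrite exp_ln in H by lra. unfold L, p in *. lra. }
  assert (HL2 : L <= x / p).
  { pose proof (exp_ineq1_le (ln (/ p))). rewrite exp_ln in H by (apply Rinv_0_lt_compat; lra).
    rewrite ln_Rinv in H by lra. unfold L.
    replace (x / p) with (/ p - 1) by (unfold p; field; lra). lra. }
  set (u := (1 - m) * L).
  assert (HG : Rpower p m = p * exp u).
  { unfold Rpower, u, L. rewrite <- (exp_ln p) at 2 by lra. rewrite <- exp_plus. f_equal. ring. }
  rewrite HG.
  assert (Hu0 : (1 - m) * x <= u) by (unfold u; nra).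
  assert (Hu1 : u <= (1 - m) * (x / p)) by (unfold u; nra).
  assert (Hxp : x / p <= 1/7).
  { apply Rmult_le_reg_r with p; [lra|]. unfold Rdiv. rewrite Rmult_assoc, Rinv_l by lra. lra. }
  assert (Hu2 : u <= 1/7) by nra.
  split.
  - pose proof (exp_ineq1_le u). nra.
  - pose proof (exp_ineq1_le (- u)).
    assert (Heu : exp u * exp (- u) = 1) by (rewrite <- exp_plus; replace (u + - u) with 0 by ring; apply exp_0).
    assert (Hexp : exp u <= 1 / (1 - u)).
    { apply Rmult_le_reg_r with (1 - u); [lra|].
      replace (1 / (1 - u) * (1 - u)) with 1 by (field; lra).
      pose proof (exp_pos u). nra. }
    assert (Hexp2 : exp u - 1 <= 7/6 * u).
    { assert (1 / (1 - u) - 1 <= 7/6 * u).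
      { replace (1 / (1 - u) - 1) with (u / (1 - u)) by (field; lra).
        apply Rmult_le_reg_r with (1 - u); [lra|].
        replace (u / (1 - u) * (1 - u)) with u by (field; lra).
        assert (0 <= u) by nra. nra. }
      lra. }
    assert (p * u <= (1 - m) * x).
    { replace ((1-m) * x) with (p * ((1 - m) * (x / p))) by (field; lra). nra. }
    nra.
Qed.

Lemma Rpower_le1 U e : 1 <= U -> e <= 0 -> Rpower U e <= 1.
Proof.
  intros HU He. unfold Rpower. rewrite <- exp_0.
  destruct (Rle_lt_or_eq_dec 1 U HU) as [H|H].
  - assert (0 < ln U) by (rewrite <- ln_1; apply ln_increasing; lra).
    destruct (Rle_lt_or_eq_dec e 0 He) as [H'|H'].
    + left. apply exp_increasing. nra.
    + subst. rewrite Rmult_0_l. lra.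
  - subst. rewrite ln_1, Rmult_0_r. lra.
Qed.

Lemma Rpower_mono_neg R0 U c : 0 < R0 -> R0 <= U -> 0 < c ->
  Rpower U (- c) <= Rpower R0 (- c).
Proof.
  intros H0 H1 Hc. rewrite !Rpower_Ropp.
  apply Rinv_le_contravar. apply Rpower_pos.
  apply Rle_Rpower_l; lra.
Qed.

Lemma P_bounds m q s g x phi Gm S Pq :
  0 < m -> m < 1 -> 1 < q -> 0 < s -> g = 1 / (2 * (1 - m)) -> x = g / s ->
  0 < x -> x <= 1 / (8 * q) -> phi = 1 - x ->
  (1 - m) * phi * x <= Gm - phi <= 7/6 * (1 - m) * x ->
  0 <= S <= 1 / (6 * q) -> 0 <= Pq <= 1 ->
  g / s ^ 2 + (Gm - phi) / (q - 1) - phi / ((q - 1) * s) + S * Pq / s <= 0 /\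
  g / s ^ 2 - (Gm - phi) / (1 - m) + S * Pq / s <= 0.
Proof.
  intros Hm0 Hm1 Hq Hs Hg Hx Hx0 Hx1 Hphi [HD1 HD2] [HS0 HS1] [HP0 HP1].
  set (i := / s). set (j := / (q - 1)). set (iq := / q).
  assert (Hi : 0 < i) by (unfold i; apply Rinv_0_lt_compat; lra).
  assert (Hj : 0 < j) by (unfold j; apply Rinv_0_lt_compat; lra).
  assert (Hiq : 0 < iq) by (unfold iq; apply Rinv_0_lt_compat; lra).
  assert (Hiqj : iq <= j) by (unfold iq, j; apply Rinv_le_contravar; lra).
  assert (Hiq1 : iq < 1) by (unfold iq; rewrite <- Rinv_1; apply Rinv_lt_contravar; lra).
  assert (Hx1' : x <= iq / 8) by (rewrite Hx1; unfold iq; right; field; lra).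
  assert (HS1' : S <= iq / 6) by (rewrite HS1; unfold iq; right; field; lra).
  assert (Hgi : g * i = x) by (rewrite Hx; unfold i; field; lra).
  assert (Hgm : g * (1 - m) = 1/2) by (rewrite Hg; field; lra).
  assert (Hiv : i = 2 * (1 - m) * x).
  { rewrite Hx, Hg. unfold i. field. split; lra. }
  assert (E1 : g / s ^ 2 = x * i) by (rewrite Hx; unfold i; field; lra).
  assert (E2 : (Gm - phi) / (q - 1) = (Gm - phi) * j) by (unfold j; field; lra).
  assert (E3 : phi / ((q - 1) * s) = phi * j * i) by (unfold i, j; field; lra).
  assert (E4 : S * Pq / s = S * Pq * i) by (unfold i; field; lra).
  assert (E5 : (Gm - phi) / (1 - m) = (Gm - phi) * / (1 - m)) by (field; lra).
  rewrite E1, E2, E3, E4, E5.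
  assert (HSP : S * Pq <= iq / 6) by nra.
  assert (Hph : 7/8 <= phi) by lra.
  assert (Hji : 0 <= j * i) by (apply Rmult_le_pos; lra).
  split.
  - assert (HD : Gm - phi <= 7/12 * i).
    { rewrite Hiv. lra. }
    assert (A1 : (Gm - phi) * j <= 7/12 * i * j) by (apply Rmult_le_compat_r; lra).
    assert (A2 : 7/8 * (j * i) <= phi * (j * i)) by (apply Rmult_le_compat_r; lra).
    assert (A3 : S * Pq * i <= iq / 6 * i) by (apply Rmult_le_compat_r; lra).
    assert (A4 : x * i <= iq / 8 * i) by (apply Rmult_le_compat_r; lra).
    assert (A5 : iq * i <= j * i) by (apply Rmult_le_compat_r; lra).
    assert (phi * j * i = phi * (j * i)) by ring.
    assert (7/12 * i * j = 7/12 * (j * i)) by ring.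
    lra.
  - assert (Hinv : 0 < / (1 - m)) by (apply Rinv_0_lt_compat; lra).
    assert (HD : 7/8 * x <= (Gm - phi) * / (1 - m)).
    { assert (H1 : 7/8 * ((1 - m) * x) <= (1 - m) * phi * x).
      { replace ((1 - m) * phi * x) with (phi * ((1 - m) * x)) by ring.
        apply Rmult_le_compat_r; [|lra]. apply Rmult_le_pos; lra. }
      replace (7/8 * x) with (7/8 * ((1 - m) * x) * / (1 - m)) by (field; lra).
      apply Rmult_le_compat_r; lra. }
    assert (Hi4 : i <= 1 / 4).
    { rewrite Hiv. assert ((1-m) * x <= x) by (assert (m * x > 0) by (apply Rmult_lt_0_compat; lra); lra).
      lra. }
    assert (Hi2 : i <= 2 * x).
    { rewrite Hiv. assert (m * x > 0) by (apply Rmult_lt_0_compat; lra). lra. }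
    assert (A1 : x * i <= x * (1 / 4)) by (apply Rmult_le_compat_l; lra).
    assert (A3 : S * Pq * i <= iq / 6 * i) by (apply Rmult_le_compat_r; lra).
    assert (A4 : iq / 6 * i <= 1 / 6 * i) by (apply Rmult_le_compat_r; lra).
    lra.
Qed.

Lemma D_phi K g s : s <> 0 ->
  derivable_pt_lim (fun t => K * (1 - g / t)) s (K * (g / s ^ 2)).
Proof.
  intros Hs.
  pose proof (derivable_pt_lim_div (fct_cte g) id s 0 1 (derivable_pt_lim_const g s) (derivable_pt_lim_id s) Hs) as H1.
  pose proof (derivable_pt_lim_minus (fct_cte 1) (fct_cte g / id)%F s 0 _ (derivable_pt_lim_const 1 s) H1) as H2.
  pose proof (derivable_pt_lim_scal _ K s _ H2) as H3.
  replace (K * (g / s ^ 2)) with (K * (0 - (0 * id s - 1 * fct_cte g s) / Rsqr (id s)))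
    by (unfold fct_cte, id, Rsqr; field; auto).
  replace (fun t => K * (1 - g / t)) with (mult_real_fct K (fct_cte 1 - fct_cte g / id)%F).
  exact H3.
  apply functional_extensionality; intros t.
  unfold mult_real_fct, minus_fct, div_fct, fct_cte, id. reflexivity.
Qed.

Lemma Rpower_1_base m : Rpower 1 m = 1.
Proof. unfold Rpower. rewrite ln_1, Rmult_0_r. apply exp_0. Qed.

Lemma Rpower_split x q : 0 < x -> Rpower x q = x * Rpower x (q - 1).
Proof.
  intros Hx. rewrite <- (Rpower_1 x) at 2 by auto. rewrite <- Rpower_plus. f_equal. ring.
Qed.

Theorem lemma3p1 :
  forall (N : nat) (m : R),
    (1 <= N)%nat ->
    Rmax (INR N - 2) 0 / INR N < m -> m < 1 ->
    exists Asub : R, 0 < Asub /\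
      ((INR N - 1) / INR N <= m ->
        forall A : R, Asub <= A ->
        forall (s : R) (y : nat -> R), 0 < s ->
          parab N m (fun _ x => sigmaA N m A x) s y <= 0)
      /\
      (m < (INR N - 1) / INR N ->
        forall A : R, Asub <= A ->
        let gamma := 1 / (2 * (1 - m)) in
        let q := qexp N m in
        let s0 := Rmax (4 * q / (1 - m)) (Rpower 2 (m + 2) * q / (q - 1)) in
        forall (s : R) (y : nat -> R), s0 < s ->
          parab N m (fun t x => sigmaA N m A x * (1 - gamma / t)) s y <= 0).
Proof.
  intros N m HN Hmax Hm1.
  assert (HNr : 0 < INR N) by (apply lt_0_INR; lia).
  assert (Hmx : Rmax (INR N - 2) 0 < m * INR N).
  { apply Rmult_lt_reg_r with (/ INR N). apply Rinv_0_lt_compat; lra.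
    rewrite Rmult_assoc, Rinv_r by lra. rewrite Rmult_1_r. exact Hmax. }
  pose proof (Rmax_l (INR N - 2) 0). pose proof (Rmax_r (INR N - 2) 0).
  assert (Hk : 0 < m * INR N - INR N + 2) by lra.
  assert (Hm0 : 0 < m) by nra.
  set (q := qexp N m).
  assert (Hq1 : q - 1 = (m * INR N - INR N + 2) / INR N) by (unfold q, qexp; field; lra).
  assert (Hq : 1 < q).
  { assert (0 < (m * INR N - INR N + 2) / INR N) by (apply Rdiv_lt_0_compat; lra). lra. }
  set (c := (q - 1) / (1 - m)).
  assert (Hc : 0 < c) by (apply Rdiv_lt_0_compat; lra).
  set (R0 := Rpower (6 * q) (1 / c)).
  assert (HR0 : 0 < R0) by apply Rpower_pos.
  assert (HB : 0 < B0 N m).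
  { unfold B0. apply Rdiv_lt_0_compat; [lra|]. nra. }
  exists (R0 + q + 1). split; [lra|]. split.
  -
    intros Hm A HA s y Hs.
    assert (HA0 : 0 < A) by lra.
    replace (fun (_ : R) x => sigmaA N m A x) with (fun (t : R) x => sigmaA N m A x * (fun _ : R => 1) t)
      by (apply functional_extensionality; intro t; apply functional_extensionality; intro x; ring).
    unfold parab.
    rewrite (Deriv_eq _ s 0) by (apply derivable_pt_lim_const).
    pose proof (Lop_simpl N m A (fun _ => 1) s y HN Hm0 Hm1 Hk HA0 ltac:(lra) ltac:(lra)) as E.
    cbv zeta beta in E. rewrite E. clear E.
    fold q. rewrite Rpower_1_base, Rmult_1_r.
    set (U := A + B0 N m * norm2 N y).
    pose proof (norm2_nonneg N y) as Hr.
    assert (HU : A <= U) by (unfold U; nra).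
    set (e := 1 / (m - 1)).
    assert (HW : 0 < Rpower U (e - 1)) by apply Rpower_pos.
    assert (Hsg : Rpower U e = U * Rpower U (e - 1)) by (apply Rpower_split; lra).
    assert (Hsg0 : 0 < Rpower U e) by apply Rpower_pos.
    rewrite (Rpower_split (Rpower U e) q Hsg0).
    rewrite Rpower_mult.
    assert (HUS : U * Rpower U (e * (q - 1)) <= 1).
    { rewrite <- (Rpower_1 U) at 1 by lra. rewrite <- Rpower_plus. apply Rpower_le1; [lra|].
      assert (Hv : (INR N - 1) / INR N = 1 - 1 / INR N) by (field; lra).
      assert (Hqv : q = m + 2 * (1 / INR N)) by (unfold q, qexp; field; lra).
      assert (He : e * (q - 1) = - ((q - 1) / (1 - m))) by (unfold e; field; lra).
      rewrite He.
      assert (1 <= (q - 1) / (1 - m)).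
      { apply Rmult_le_reg_r with (1 - m); [lra|]. unfold Rdiv. rewrite Rmult_assoc, Rinv_l by lra. lra. }
      lra. }
    set (W := Rpower U (e - 1)) in *. set (S := Rpower U (e * (q - 1))) in *.
    set (sg := Rpower U e) in *.
    set (k := INR N * (q - 1)).
    set (X := INR N * sg + 2 * e * (B0 N m * norm2 N y * W)).
    assert (Hid : 1 / ((q - 1) * s) * (sg - B0 N m * norm2 N y * W) - sg * S / s
                 = W / s * (A / (q - 1) - U * S)).
    { rewrite Hsg. unfold U. field. split; lra. }
    assert (HA1 : 1 <= A / (q - 1)).
    { apply Rmult_le_reg_r with (q - 1); [lra|]. unfold Rdiv. rewrite Rmult_assoc, Rinv_l by lra. lra. }
    assert (0 <= W / s * (A / (q - 1) - U * S)).
    { apply Rmult_le_pos. unfold Rdiv; apply Rmult_le_pos; [lra|]; left; apply Rinv_0_lt_compat; lra. lra. }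
    assert (E2 : - (1 / k) * X + 1 / k * X = 0) by ring.
    replace (1 / ((q - 1) * s)) with (1 / ((q - 1) * s)) by reflexivity.
    lra.
  - intros Hm A HA. cbv zeta. intros s y Hs.
    assert (HA0 : 0 < A) by lra.
    set (gm := 1 / (2 * (1 - m))).
    pose proof (Rmax_l (4 * q / (1 - m)) (Rpower 2 (m + 2) * q / (q - 1))) as Hs4.
    assert (Hs' : 4 * q / (1 - m) < s) by lra.
    assert (H4q : 0 < 4 * q / (1 - m)) by (apply Rdiv_lt_0_compat; lra).
    assert (Hs0 : 0 < s) by lra.
    set (x := gm / s).
    assert (Hgm : 0 < gm) by (unfold gm; apply Rdiv_lt_0_compat; lra).
    assert (Hx0 : 0 < x) by (unfold x; apply Rdiv_lt_0_compat; lra).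
    assert (Hx1 : x <= 1 / (8 * q)).
    { assert (E : 4 * q / (1 - m) = 8 * q * gm) by (unfold gm; field; lra).
      rewrite E in Hs'. unfold x.
      apply Rmult_le_reg_r with (8 * q * s); [nra|].
      replace (gm / s * (8 * q * s)) with (8 * q * gm) by (field; lra).
      replace (1 / (8 * q) * (8 * q * s)) with s by (field; lra). lra. }
    assert (Hx8 : x <= 1 / 8).
    { assert (1 / (8 * q) <= 1 / 8).
      { unfold Rdiv. rewrite !Rmult_1_l. apply Rinv_le_contravar; lra. }
      lra. }
    assert (Hphi : 0 < 1 - gm / s) by (fold x; lra).
    unfold parab. cbv beta.
    rewrite (Deriv_eq _ s (sigmaA N m A y * (gm / s ^ 2))) by (apply D_phi; lra).
    pose proof (Lop_simpl N m A (fun t => 1 - gm / t) s y HN Hm0 Hm1 Hk HA0 Hphi ltac:(lra)) as E.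
    cbv zeta beta in E. rewrite E. clear E.
    fold q. fold x.
    set (U := A + B0 N m * norm2 N y).
    pose proof (norm2_nonneg N y) as Hr.
    assert (HU : A <= U) by (unfold U; nra).
    set (e := 1 / (m - 1)).
    assert (HW : 0 < Rpower U (e - 1)) by apply Rpower_pos.
    assert (Hsg : Rpower U e = U * Rpower U (e - 1)) by (apply Rpower_split; lra).
    assert (Hsg0 : 0 < Rpower U e) by apply Rpower_pos.
    unfold sigmaA. fold U. fold e.
    rewrite <- (Rpower_mult_distr (Rpower U e) (1 - x) q Hsg0 ltac:(lra)).
    rewrite (Rpower_split (Rpower U e) q Hsg0).
    rewrite Rpower_mult.
    assert (HS : Rpower U (e * (q - 1)) <= 1 / (6 * q)).
    { assert (He : e * (q - 1) = - c) by (unfold e, c; field; lra).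
      rewrite He. eapply Rle_trans. apply (Rpower_mono_neg R0 U c HR0 ltac:(lra) Hc).
      unfold R0. rewrite Rpower_mult. replace (1 / c * - c) with (Ropp 1) by (field; lra).
      rewrite Rpower_Ropp, Rpower_1 by lra. right; field; lra. }
    assert (HPq : Rpower (1 - x) q <= 1).
    { eapply Rle_trans; [apply (Rle_Rpower_l (1 - x) 1 q); lra | rewrite Rpower_1_base; lra]. }
    pose proof (phi_bounds m x Hm0 Hm1 Hx0 Hx8) as Hpb.
    set (Gm := Rpower (1 - x) m) in *.
    set (W := Rpower U (e - 1)) in *. set (S := Rpower U (e * (q - 1))) in *.
    set (Pq := Rpower (1 - x) q) in *.
    set (sg := Rpower U e) in *.
    assert (HS0 : 0 <= S) by (left; apply Rpower_pos).
    assert (HPq0 : 0 <= Pq) by (left; apply Rpower_pos).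
    destruct (P_bounds m q s gm x (1 - x) Gm S Pq Hm0 Hm1 Hq Hs0 eq_refl eq_refl Hx0 Hx1 eq_refl
                ltac:(lra) ltac:(lra) ltac:(lra)) as [P0 P1].
    set (T := B0 N m * norm2 N y * W).
    assert (HT : 0 <= T) by (unfold T; apply Rmult_le_pos; [nra|lra]).
    assert (HsT : 0 <= sg - T) by (unfold T; rewrite Hsg; unfold U; nra).
    set (k := INR N * (q - 1)).
    assert (Hid : sg * (gm / s ^ 2) -
      (- (Gm / k) * (INR N * sg + 2 * e * T) + (1 - x) / k * (INR N * sg + 2 * e * T) +
       (1 - x) / ((q - 1) * s) * (sg - T) - sg * S * Pq / s)
      = (sg - T) * (gm / s ^ 2 + (Gm - (1 - x)) / (q - 1) - (1 - x) / ((q - 1) * s) + S * Pq / s)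
        + T * (gm / s ^ 2 - (Gm - (1 - x)) / (1 - m) + S * Pq / s)).
    { unfold k, e, q, qexp. field. repeat split; try lra. }
    rewrite Hid.
    assert (0 <= (sg - T) * - (gm / s ^ 2 + (Gm - (1 - x)) / (q - 1) - (1 - x) / ((q - 1) * s) + S * Pq / s))
      by (apply Rmult_le_pos; lra).
    assert (0 <= T * - (gm / s ^ 2 - (Gm - (1 - x)) / (1 - m) + S * Pq / s))
      by (apply Rmult_le_pos; lra).
    lra.
Qed.
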